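(* Let $L_0$ be the Laplacian of a connected undirected simple graph on $n$ vertices with positive nominal edge weight vector $\omega_0$, with nonzero eigenvalues $0<\lambda_{0,2}\le\dots\le\lambda_{0,n}$. Fix $\tau>0$, $b\neq0$ and $\alpha_\omega\in[0,1)$ with $(1+\alpha_\omega)\lambda_{0,n}\tau<\pi/2$. Let $f_\tau(\lambda)=\frac{\cos(\lambda\tau)}{\lambda(1-\sin(\lambda\tau))}$ on $(0,\pi/(2\tau))$, let $\bar\lambda$ be its (unique) minimizer there, and set $$\chi^{\pm}(\lambda)=\frac{|f_\tau((1\pm\alpha_\omega)\lambda)-f_\tau(\lambda)|}{f_\tau(\lambda)}.$$ Consider uniformly scaled edge weights $\omega=s\,\omega_0$ with $s\in[1-\alpha_\omega,1+\alpha_\omega]$, with Laplacian $L=sL_0$, and let $\Sigma$, $\Sigma_0$ denote the steady-state covariances for $L$ and $L_0$ respectively. Then: (i) if $(1+\alpha_\omega)\lambda_{0,n}\le\bar\lambda$, then $(1-\varepsilon^-)\Sigma_0\preceq\Sigma\preceq(1+\varepsilon^+)\Sigma_0$ with $\varepsilon^-=\max_{k\in\{2,\dots,n\}}\chi^+(\lambda_{0,k})$ and $\varepsilon^+=\max_{k\in\{2,\dots,n\}}\chi^-(\lambda_{0,k})$; (ii) if $(1-\alpha_\omega)\lambda_{0,2}\ge\bar\lambda$, then $(1-\varepsilon^-)\Sigma_0\preceq\Sigma\preceq(1+\varepsilon^+)\Sigma_0$ with $\varepsilon^+=\max_{k\in\{2,\dots,n\}}\chi^+(\lambda_{0,k})$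 and $\varepsilon^-=\max_{k\in\{2,\dots,n\}}\chi^-(\lambda_{0,k})$.
   Context: Network: $\mathrm dx_t=-L\,x_{t-\tau}\,\mathrm dt+b\,\mathrm dw_t$ with $w_t$ standard $n$-dimensional Brownian motion. Writing $L=Q\Lambda Q^\top$ with $Q=[q_1|\dots|q_n]$ orthogonal, $q_1=\mathbf 1_n/\sqrt n$, $\Lambda=\mathrm{diag}(0,\lambda_2,\dots,\lambda_n)$, $\lambda_n\tau<\pi/2$, the observables $y=M_nx$, $M_n=I_n-\frac1n\mathbf 1_n\mathbf 1_n^\top$, have steady-state law $\mathcal N(0,\Sigma)$ with $\Sigma=b^2M_nQ\,\mathrm{diag}\big(0,\tfrac12f_\tau(\lambda_2),\dots,\tfrac12f_\tau(\lambda_n)\big)Q^\top M_n$. $A\preceq B$ means $B-A$ is positive semidefinite. *)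

(* Defs.v *)
From HB Require Import structures.
From mathcomp Require Import all_boot all_order all_algebra.
From mathcomp Require Import all_classical all_reals all_analysis.
Set Implicit Arguments. Unset Strict Implicit. Unset Printing Implicit Defensive.
Import Order.TTheory GRing.Theory Num.Theory.
Local Open Scope ring_scope.

Definition ftau (R : realType) (tau x : R) : R :=
  cos (x * tau) / (x * (1 - sin (x * tau))).

(* chi^{+/-}; sgn = 1 for chi^+, sgn = -1 for chi^- *)
Definition chi (R : realType) (tau alpha sgn x : R) : R :=
  `| ftau tau ((1 + sgn * alpha) * x) - ftau tau x | / ftau tau x.

Definition laplacian (R : realType) (N : nat) (w : 'I_N -> 'I_N -> R) : 'M[R]_N :=
  \matrix_(i, j) (if i == j then \sum_(k < N) w i k else - w i j).

Definition centering (R : realType) (N : nat) : 'M[R]_N :=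
  1%:M - (N%:R)^-1 *: const_mx 1.

(* steady-state covariance b^2 M Q diag(0, f(l_2)/2, ..., f(l_N)/2) Q^T M
   for a decomposition L = Q diag(lam) Q^T with lam ord0 = 0 *)
Definition ss_covariance (R : realType) (n : nat) (tau b : R)
  (Q : 'M[R]_n.+1) (lam : 'I_n.+1 -> R) : 'M[R]_n.+1 :=
  b ^+ 2 *: (@centering R n.+1 *m Q
     *m diag_mx (\row_i (if i == ord0 then 0 else ftau tau (lam i) / 2))
     *m Q^T *m @centering R n.+1).

Definition loewner_le (R : realType) (N : nat) (A B : 'M[R]_N) : Prop :=
  forall v : 'cV[R]_N, 0 <= (v^T *m (B - A) *m v) 0 0.

(* maximum over k in {2,...,n} (0-based: k <> 0) *)
Definition max_nonzero (R : realType) (n : nat) (g : 'I_n.+1 -> R) : R :=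
  \big[Num.max/0]_(k < n.+1 | k != ord0) g k.

(* Main.v *)
Require Import Defs.
From HB Require Import structures.
From mathcomp Require Import all_boot all_order all_algebra.
From mathcomp Require Import all_classical all_reals all_analysis.
From mathcomp Require Import ring lra.
Import Order.TTheory GRing.Theory Num.Theory.
Local Open Scope ring_scope.
Import numFieldNormedType.Exports.
Definition hh {R : realType} (u : R) := u * cos u / (1 + sin u).

Lemma hh_derive {R : realType} (x : R) : 1 + sin x != 0 ->
  is_derive x 1 hh ((cos x - x) / (1 + sin x)).
Proof.
move=> hx.
have dV : is_derive x (1:R) (fun y : R => (1 + sin y)^-1) (- (1 + sin x) ^- 2 *: cos x).
  have d1 : is_derive x (1:R) (fun y : R => 1 + sin y) (0 + cos x).
    have -> : (fun y : R => 1 + sin y) = (cst 1 + sin) by apply/funext.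
    apply: is_deriveD.
  apply: DeriveDef; first by apply: derivableV.
  by rewrite deriveV // derive_val add0r.
have dM : is_derive x (1:R) ((id * cos) * (fun y : R => (1 + sin y)^-1))
   ((id * cos) x *: (- (1 + sin x) ^- 2 *: cos x) + (fun y : R => (1 + sin y)^-1) x *: (id x *: - sin x + cos x *: 1)).
  apply: is_deriveM.
have -> : hh = ((id * cos) * (fun y : R => (1 + sin y)^-1)) by apply/funext=> y.
apply: is_derive_eq dM _.
rewrite /= /GRing.scale /=.
apply/eqP; rewrite -subr_eq0; apply/eqP.
transitivity (x * (1 - (cos x ^+ 2 + sin x ^+ 2)) / (1 + sin x) ^+ 2).
  have -> : (id * cos) x = x * cos x by []. by field.
by rewrite cos2Dsin2 subrr mulr0 mul0r.
Qed.


Lemma sinp1_gt0 {R : realType} {x : R} : 0 < x < pi / 2 -> 0 < 1 + sin x.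
Proof. by move=> /sin_gt0_pihalf h; rewrite addr_gt0. Qed.

Lemma hh_D {R : realType} {x : R} : 0 < x < pi / 2 ->
  derivable hh x 1 /\ 'D_1 hh x = (cos x - x) / (1 + sin x).
Proof.
move=> hx; have hs := sinp1_gt0 hx.
have d := hh_derive x (lt0r_neq0 hs).
by split; [exact: ex_derive | rewrite derive_val].
Qed.

Lemma cos_le_mono {R : realType} (x y : R) : 0 <= x -> x <= y -> y <= pi -> cos y <= cos x.
Proof.
move=> x0 xy ypi; case: (eqVneq x y) => [->//|nxy].
have xy' : x < y by rewrite lt_neqAle nxy.
apply: ltW; rewrite ltr_cos // in_itv /= ?x0 ?ypi ?(le_trans x0 xy) //.
by rewrite (le_trans xy ypi).
Qed.

Lemma pi_gt0' {R : realType} : (0:R) < pi. Proof. exact: pi_gt0. Qed.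

Lemma hh_mono {R : realType} (p q : R) : 0 < p -> p <= q -> q < pi / 2 -> q <= cos q -> hh p <= hh q.
Proof.
move=> p0 pq qpi qc.
have hpi : (pi : R) / 2 <= pi by have := (@pi_gt0' R); lra.
apply: (@ger0_derive1_le_cc _ hh p q) => //.
- by move=> x; rewrite in_itv /= => /andP[px xq]; apply: (hh_D _).1;
    rewrite (lt_trans p0 px) (lt_trans xq qpi).
- move=> x; rewrite in_itv /= => /andP[px xq].
  have hx : 0 < x < pi / 2 by rewrite (lt_trans p0 px) (lt_trans xq qpi).
  rewrite derive1E (hh_D hx).2 divr_ge0 // ?(ltW (sinp1_gt0 hx)) // subr_ge0.
  apply: (le_trans (ltW xq)); apply: (le_trans qc); apply: cos_le_mono.
  + exact: ltW (lt_trans p0 px).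
  + exact: ltW.
  + exact: le_trans (ltW qpi) hpi.
- apply: derivable_within_continuous => x; rewrite in_itv /= => /andP[px xq].
  apply: (hh_D _).1; rewrite (lt_le_trans p0 px) (le_lt_trans xq qpi) //.
- by rewrite in_itv /= lexx pq.
- by rewrite in_itv /= lexx pq.
Qed.

Lemma hh_anti {R : realType} (p q : R) : 0 < p -> p <= q -> q < pi / 2 -> cos p <= p -> hh q <= hh p.
Proof.
move=> p0 pq qpi qc.
have hpi : (pi : R) / 2 <= pi by have := (@pi_gt0' R); lra.
apply: (@ler0_derive1_le_cc _ hh p q) => //.
- by move=> x; rewrite in_itv /= => /andP[px xq]; apply: (hh_D _).1;
    rewrite (lt_trans p0 px) (lt_trans xq qpi).
- move=> x; rewrite in_itv /= => /andP[px xq].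
  have hx : 0 < x < pi / 2 by rewrite (lt_trans p0 px) (lt_trans xq qpi).
  rewrite derive1E (hh_D hx).2 mulr_le0_ge0 // ?invr_ge0 ?(ltW (sinp1_gt0 hx)) // subr_le0.
  apply: (le_trans _ (le_trans qc (ltW px))); apply: cos_le_mono.
  + exact: ltW.
  + exact: ltW.
  + exact: le_trans (ltW (lt_trans xq qpi)) hpi.
- apply: derivable_within_continuous => x; rewrite in_itv /= => /andP[px xq].
  apply: (hh_D _).1; rewrite (lt_le_trans p0 px) (le_lt_trans xq qpi) //.
- by rewrite in_itv /= lexx pq.
- by rewrite in_itv /= lexx pq.
Qed.

Lemma hh_pos {R : realType} (u : R) : 0 < u -> u < pi / 2 -> 0 < hh u.
Proof.
move=> u0 upi; have hu : 0 < u < pi / 2 by rewrite u0 upi.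
rewrite /hh divr_gt0 ?mulr_gt0 ?sinp1_gt0 // cos_gt0_pihalf //.
by rewrite upi andbT (lt_trans _ u0) // oppr_lt0 divr_gt0 // (@pi_gt0' R).
Qed.

Lemma ftau_hh {R : realType} (tau x : R) : 0 < tau -> 0 < x -> x * tau < pi / 2 ->
  ftau tau x = tau / hh (x * tau).
Proof.
move=> t0 x0 xpi; set u := x * tau.
have u0 : 0 < u by rewrite mulr_gt0.
have hu : 0 < u < pi / 2 by rewrite u0 xpi.
have c0 : 0 < cos u.
  by rewrite cos_gt0_pihalf // xpi andbT (lt_trans _ u0) // oppr_lt0 divr_gt0 // (@pi_gt0' R).
have s1 : sin u < 1.
  rewrite lt_neqAle sin_le1 andbT; apply/eqP => s1.
  have := cos2Dsin2 u; rewrite s1 expr1n => /eqP; rewrite -subr_eq0 addrK.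
  by rewrite sqrf_eq0 gt_eqF.
have sp := sinp1_gt0 hu.
apply/eqP; rewrite -subr_eq0; apply/eqP.
transitivity ((cos u ^+ 2 + sin u ^+ 2 - 1) / (x * (1 - sin u) * cos u)).
  rewrite /ftau /hh -/u.
  have ? : x != 0 by rewrite gt_eqF.
  have ? : tau != 0 by rewrite gt_eqF.
  have ? : cos u != 0 by rewrite gt_eqF.
  have ? : 1 - sin u != 0 by rewrite gt_eqF // subr_gt0.
  have ? : 1 + sin u != 0 by rewrite gt_eqF.
  rewrite /u; field.
  by rewrite -/u; repeat (apply/andP; split) => //.
by rewrite cos2Dsin2 subrr mul0r.
Qed.

Lemma lt_pi2 {R : realType} (tau z : R) : 0 < tau -> (z < pi / (2 * tau)) = (z * tau < pi / 2).
Proof.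
move=> t0; rewrite ltr_pdivlMr ?mulr_gt0 // ltr_pdivlMr //.
by congr (_ < _); ring.
Qed.

Lemma div_anti {R : realType} (a b c : R) : 0 < a -> a <= b -> 0 <= c -> c / b <= c / a.
Proof.
move=> a0 ab c0; apply: ler_wpM2l => //.
by rewrite lef_pV2 ?posrE // (lt_le_trans a0 ab).
Qed.

Lemma div_anti_rev {R : realType} (a b c : R) : 0 < c -> 0 < a -> 0 < b -> c / b <= c / a -> a <= b.
Proof. by move=> c0 a0 b0; rewrite ler_pM2l // lef_pV2 ?posrE. Qed.

Lemma F_pos {R : realType} (tau x : R) : 0 < tau -> 0 < x -> x * tau < pi / 2 -> 0 < ftau tau x.
Proof.
move=> t0 x0 h; rewrite ftau_hh // divr_gt0 // hh_pos // mulr_gt0 //.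
Qed.

Lemma F_decr {R : realType} (tau lbar x y : R) : 0 < tau -> 0 < x -> x <= y -> y <= lbar ->
  lbar * tau < pi / 2 ->
  (forall z, 0 < z -> z < pi / (2 * tau) -> ftau tau lbar <= ftau tau z) ->
  ftau tau y <= ftau tau x.
Proof.
move=> t0 x0 xy yl lpi hmin.
have y0 : 0 < y := lt_le_trans x0 xy.
have l0 : 0 < lbar := lt_le_trans y0 yl.
have Yl : y * tau <= lbar * tau by rewrite ler_pM2r.
have Xy : x * tau <= y * tau by rewrite ler_pM2r.
have Ypi : y * tau < pi / 2 := le_lt_trans Yl lpi.
have Xpi : x * tau < pi / 2 := le_lt_trans Xy Ypi.
have X0 : 0 < x * tau by rewrite mulr_gt0.
have Y0 : 0 < y * tau by rewrite mulr_gt0.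
have L0 : 0 < lbar * tau by rewrite mulr_gt0.
rewrite !ftau_hh //; apply: div_anti; rewrite ?hh_pos ?(ltW t0) //.
case: (lerP (y * tau) (cos (y * tau))) => hY.
  exact: hh_mono.
apply: (@le_trans _ _ (hh (lbar * tau))); last exact: hh_anti (ltW hY).
have := hmin x x0; rewrite lt_pi2 // => /(_ Xpi).
rewrite !ftau_hh //; apply: div_anti_rev => //; exact: hh_pos.
Qed.

Lemma F_incr {R : realType} (tau lbar x y : R) : 0 < tau -> 0 < lbar -> lbar <= x -> x <= y ->
  y * tau < pi / 2 ->
  (forall z, 0 < z -> z < pi / (2 * tau) -> ftau tau lbar <= ftau tau z) ->
  ftau tau x <= ftau tau y.
Proof.
move=> t0 l0 lx xy ypi hmin.
have x0 : 0 < x := lt_le_trans l0 lx.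
have y0 : 0 < y := lt_le_trans x0 xy.
have Lx : lbar * tau <= x * tau by rewrite ler_pM2r.
have Xy : x * tau <= y * tau by rewrite ler_pM2r.
have Xpi : x * tau < pi / 2 := le_lt_trans Xy ypi.
have Lpi : lbar * tau < pi / 2 := le_lt_trans Lx Xpi.
have X0 : 0 < x * tau by rewrite mulr_gt0.
have Y0 : 0 < y * tau by rewrite mulr_gt0.
have L0 : 0 < lbar * tau by rewrite mulr_gt0.
rewrite !ftau_hh //; apply: div_anti; rewrite ?hh_pos ?(ltW t0) //.
case: (lerP (cos (x * tau)) (x * tau)) => hX.
  exact: hh_anti.
apply: (@le_trans _ _ (hh (lbar * tau))); last exact: hh_mono (ltW hX).
have := hmin y y0; rewrite lt_pi2 // => /(_ ypi).
rewrite !ftau_hh //; apply: div_anti_rev => //; exact: hh_pos.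
Qed.

Lemma centering_tr {R : realType} (N : nat) : (@centering R N)^T = centering R N.
Proof. by rewrite /centering linearB linearZ /= trmx1 trmx_const. Qed.

Lemma quad_diag {R : realType} (N : nat) (w : 'cV[R]_N) (r : 'rV[R]_N) :
  (w^T *m diag_mx r *m w) 0 0 = \sum_i r 0 i * w i 0 ^+ 2.
Proof.
rewrite mul_mx_diag !mxE; apply: eq_bigr => i _; rewrite !mxE; ring.
Qed.

Lemma quad_ss {R : realType} (n : nat) (tau b : R) (Q : 'M[R]_n.+1) (lam : 'I_n.+1 -> R)
  (v : 'cV[R]_n.+1) :
  (v^T *m ss_covariance tau b Q lam *m v) 0 0 =
  b ^+ 2 * \sum_i (if i == ord0 then 0 else ftau tau (lam i) / 2)
     * (Q^T *m centering R n.+1 *m v) i 0 ^+ 2.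
Proof.
rewrite /ss_covariance -scalemxAr -scalemxAl mxE; congr (_ * _).
set w := Q^T *m centering R n.+1 *m v.
set D := diag_mx _.
have -> : v^T *m (centering R n.+1 *m Q *m D *m Q^T *m centering R n.+1) *m v
   = w^T *m D *m w.
  by rewrite /w !trmx_mul trmxK centering_tr !mulmxA.
by rewrite quad_diag; apply: eq_bigr => i _; rewrite mxE.
Qed.


Lemma loewner_ss {R : realType} (n : nat) (tau b : R) (Q : 'M[R]_n.+1) (lam1 lam2 : 'I_n.+1 -> R)
  (c1 c2 : R) :
  (forall i : 'I_n.+1, i != ord0 -> c1 * ftau tau (lam1 i) <= c2 * ftau tau (lam2 i)) ->
  loewner_le (c1 *: ss_covariance tau b Q lam1) (c2 *: ss_covariance tau b Q lam2).
Proof.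
move=> h v.
have eB (A B : 'M[R]_1) : (A - B) 0 0 = A 0 0 - B 0 0 by rewrite !mxE.
have eZ (c : R) (A : 'M[R]_1) : (c *: A) 0 0 = c * A 0 0 by rewrite !mxE.
move: (quad_ss n tau b Q lam1 v) (quad_ss n tau b Q lam2 v).
move: (ss_covariance tau b Q lam1) (ss_covariance tau b Q lam2) => S1 S2 q1 q2.
rewrite mulmxBr mulmxBl -!scalemxAr -!scalemxAl eB !eZ q1 q2 subr_ge0.
rewrite mulrCA [c2 * _]mulrCA; apply: ler_wpM2l; first exact: sqr_ge0.
rewrite !mulr_sumr; apply: ler_sum => i _.
case: (eqVneq i ord0) => [_|hi]; first by rewrite !mul0r !mulr0.
rewrite (mulrA c1) (mulrA c2); apply: ler_wpM2r; first exact: sqr_ge0.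
rewrite (mulrA c1) (mulrA c2); apply: ler_wpM2r; first by rewrite invr_ge0.
exact: h.
Qed.

Lemma bound {R : realType} (F0 Fs A B e1 e2 : R) : 0 < F0 -> A <= Fs -> Fs <= B ->
  `|A - F0| / F0 <= e1 -> `|B - F0| / F0 <= e2 ->
  (1 - e1) * F0 <= Fs /\ Fs <= (1 + e2) * F0.
Proof.
move=> F0p AF FB; rewrite !ler_pdivrMr // => h1 h2.
have n1 : F0 - A <= `|A - F0| by rewrite distrC ler_norm.
have n2 : B - F0 <= `|B - F0| by rewrite ler_norm.
rewrite mulrBl mulrDl !mul1r; split; lra.
Qed.

Lemma max_ge {R : realType} (n : nat) (g : 'I_n.+1 -> R) (k : 'I_n.+1) :
  k != ord0 -> g k <= max_nonzero g.
Proof. by move=> hk; rewrite /max_nonzero; apply: le_bigmax_cond. Qed.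

Theorem proposition4 (R : realType) (n : nat)
  (E : rel 'I_n.+1) (w0 : 'I_n.+1 -> 'I_n.+1 -> R)
  (Q : 'M[R]_n.+1) (lam0 : 'I_n.+1 -> R)
  (tau b alpha lbar s : R) :
  (* connected undirected simple graph with positive edge weights *)
  (forall i, ~~ E i i) ->
  (forall i j, E i j = E j i) ->
  (forall i j, connect E i j) ->
  (forall i j, w0 i j = w0 j i) ->
  (forall i j, E i j -> 0 < w0 i j) ->
  (forall i j, ~~ E i j -> w0 i j = 0) ->
  (* spectral decomposition L0 = Q Lambda Q^T *)
  Q *m Q^T = 1%:M ->
  col ord0 Q = const_mx (Num.sqrt (n.+1)%:R)^-1 ->
  laplacian w0 = Q *m diag_mx (\row_i lam0 i) *m Q^T ->
  lam0 ord0 = 0 ->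
  (forall i j : 'I_n.+1, (i <= j)%N -> lam0 i <= lam0 j) ->
  (* parameters *)
  0 < tau -> b != 0 -> 0 <= alpha -> alpha < 1 ->
  (1 + alpha) * lam0 ord_max * tau < pi / 2 ->
  (* lbar is the minimizer of f_tau on (0, pi/(2 tau)) *)
  0 < lbar -> lbar < pi / (2 * tau) ->
  (forall x, 0 < x -> x < pi / (2 * tau) -> ftau tau lbar <= ftau tau x) ->
  (* uniform scaling *)
  1 - alpha <= s -> s <= 1 + alpha ->
  let Sigma0 := ss_covariance tau b Q lam0 in
  let Sigma := ss_covariance tau b Q (fun i => s * lam0 i) in
  ((1 + alpha) * lam0 ord_max <= lbar ->
     let em := max_nonzero (fun k => chi tau alpha 1 (lam0 k)) in
     let ep := max_nonzero (fun k => chi tau alpha (-1) (lam0 k)) in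
     loewner_le ((1 - em) *: Sigma0) Sigma /\
     loewner_le Sigma ((1 + ep) *: Sigma0))
  /\
  ((1 - alpha) * lam0 (inord 1) >= lbar ->
     let ep := max_nonzero (fun k => chi tau alpha 1 (lam0 k)) in
     let em := max_nonzero (fun k => chi tau alpha (-1) (lam0 k)) in
     loewner_le ((1 - em) *: Sigma0) Sigma /\
     loewner_le Sigma ((1 + ep) *: Sigma0)).
Proof.
move=> Eirr Esym Econ wsym wpos wz QQ Qcol Ldec l00 lmono t0 b0 a0 a1 hmax
  l0 lpi hmin s1 s2 Sigma0 Sigma.
have lk0 k : 0 <= lam0 k by rewrite -l00; apply: lmono.
have lkmax k : lam0 k <= lam0 ord_max by apply: lmono; rewrite -ltnS.
have lpi' : lbar * tau < pi / 2 by rewrite -lt_pi2.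
have a1p : 0 < 1 + alpha by lra.
have am : 0 < 1 - alpha by lra.
have sp : 0 < s by lra.
have kpi k : (1 + alpha) * lam0 k * tau < pi / 2.
  apply: le_lt_trans hmax; rewrite ler_pM2r // ler_pM2l //.
have F00 : ftau tau 0 = 0 by rewrite /ftau !mul0r invr0 mulr0.
have chiP k : 0 < lam0 k ->
   0 < ftau tau (lam0 k) /\ 0 < ftau tau ((1 - alpha) * lam0 k) /\
   0 < ftau tau (s * lam0 k) /\ 0 < ftau tau ((1 + alpha) * lam0 k).
  move=> lp; have := kpi k => kp.
  have h x : 0 < x -> x <= 1 + alpha -> 0 < ftau tau (x * lam0 k).
    move=> x0 xa; apply: F_pos => //; first by rewrite mulr_gt0.
    by apply: le_lt_trans kp; rewrite ler_pM2r // ler_pM2r.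
  split; first by rewrite -[lam0 k]mul1r; apply: h; lra.
  by do ! split; apply: h; lra.
split.
- move=> hi em ep.
  have key k : k != ord0 ->
    (1 - em) * ftau tau (lam0 k) <= ftau tau (s * lam0 k) /\
    ftau tau (s * lam0 k) <= (1 + ep) * ftau tau (lam0 k).
    move=> hk; have := lk0 k; rewrite le_eqVlt => /predU1P[<-|lp].
      by rewrite mulr0 F00 !mulr0.
    have [F1 [F2 [F3 F4]]] := chiP k lp.
    have hl : (1 + alpha) * lam0 k <= lbar.
      by apply: le_trans hi; rewrite ler_pM2l.
    apply: (@bound R _ _ (ftau tau ((1 + alpha) * lam0 k)) (ftau tau ((1 - alpha) * lam0 k)) _ _ F1).
    + apply: (@F_decr R tau lbar _ _ t0 _ _ hl lpi' hmin); first by rewrite mulr_gt0.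
      by rewrite ler_pM2r.
    + apply: (@F_decr R tau lbar _ _ t0 _ _ _ lpi' hmin); first by rewrite mulr_gt0.
      * by rewrite ler_pM2r.
      * by apply: le_trans hl; rewrite ler_pM2r //; lra.
    + apply: le_trans (@max_ge R n (fun j => chi tau alpha 1 (lam0 j)) k hk); by rewrite /chi mul1r.
    + apply: le_trans (@max_ge R n (fun j => chi tau alpha (-1) (lam0 j)) k hk); by rewrite /chi mulN1r.
  split.
  + rewrite -[Sigma]scale1r; apply: loewner_ss => k hk.
    by rewrite mul1r; case: (key k hk).
  + rewrite -[Sigma]scale1r; apply: loewner_ss => k hk.
    by rewrite mul1r; case: (key k hk).
- move=> hii ep em.
  have key k : k != ord0 ->
    (1 - em) * ftau tau (lam0 k) <= ftau tau (s * lam0 k) /\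
    ftau tau (s * lam0 k) <= (1 + ep) * ftau tau (lam0 k).
    move=> hk.
    have h1k : lam0 (inord 1) <= lam0 k.
      apply: lmono; rewrite inordK //.
        by rewrite lt0n.
      by apply: leq_ltn_trans (ltn_ord k); rewrite lt0n.
    have hl : lbar <= (1 - alpha) * lam0 k.
      by apply: (le_trans hii); rewrite ler_pM2l.
    have lp : 0 < lam0 k.
      rewrite lt_neqAle lk0 andbT; apply/eqP => e.
      by move: hl; rewrite -e mulr0 leNgt l0.
    have [F1 [F2 [F3 F4]]] := chiP k lp.
    have kp := kpi k.
    apply: (@bound R _ _ (ftau tau ((1 - alpha) * lam0 k)) (ftau tau ((1 + alpha) * lam0 k)) _ _ F1).
    + apply: (@F_incr R tau lbar _ _ t0 l0 hl _ _ hmin); first by rewrite ler_pM2r.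
      by apply: le_lt_trans kp; rewrite ler_pM2r // ler_pM2r.
    + apply: (@F_incr R tau lbar _ _ t0 l0 _ _ kp hmin).
      * by apply: le_trans hl _; rewrite ler_pM2r.
      * by rewrite ler_pM2r.
    + apply: le_trans (@max_ge R n (fun j => chi tau alpha (-1) (lam0 j)) k hk); by rewrite /chi mulN1r.
    + apply: le_trans (@max_ge R n (fun j => chi tau alpha 1 (lam0 j)) k hk); by rewrite /chi mul1r.
  split.
  + rewrite -[Sigma]scale1r; apply: loewner_ss => k hk.
    by rewrite mul1r; case: (key k hk).
  + rewrite -[Sigma]scale1r; apply: loewner_ss => k hk.
    by rewrite mul1r; case: (key k hk).
Qed.
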